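(* Consider the contact process with infection rate $\lambda<1$ on the star graph $S_k$ with root $\rho$ and $k$ leaves. Let $\ell=\lambda k$ and assume the root is infected at time $0$. Let $C$ be a positive number with $C\le \frac{\ell}{32\log\ell}$. Then with probability at least \[ 1-\frac{16C\log\ell}{\ell}-4\ell^{-C/4}, \] the root $\rho$ infects at least $C\log\ell$ leaves which remain infected throughout the time interval $\big[\frac{16C\log\ell}{\ell},1\big]$ (an interval containing $[1/2,1]$).
   Context: The star graph $S_k$ consists of a root $\rho$ joined by an edge to each of $k$ leaves. The contact process with infection rate $\lambda$: each infected vertex recovers at rate $1$ and infects each neighbour independently at rate $\lambda$, all events independent. *)

(* Defs.v *)
From HB Require Import structures.
From mathcomp Require Import all_boot all_order all_algebra.
From mathcomp Require Import all_classical all_reals all_analysis.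
Set Implicit Arguments. Unset Strict Implicit. Unset Printing Implicit Defensive.
Import Order.TTheory GRing.Theory Num.Theory.
Local Open Scope classical_set_scope.
Local Open Scope ring_scope.

(* Star graph S_k: vertices are [option 'I_k]; [None] is the root rho,
   [Some i] is the i-th leaf. *)
Definition vertex (k : nat) := option 'I_k.
Definition root {k : nat} : vertex k := None.

(* Clocks of the graphical representation (Harris construction):
   [inl v]          : recovery Poisson process at vertex v (rate 1);
   [inr (i, true)]  : infection arrows root -> leaf i (rate lambda);
   [inr (i, false)] : infection arrows leaf i -> root (rate lambda). *)
Definition clock (k : nat) := (option 'I_k + ('I_k * bool))%type.

Definition clock_rate {R : realType} {k : nat} (lam : R) (c : clock k) : R :=
  match c with inl _ => 1 | inr _ => lam end.

Definition arrow_clock {k : nat} (v w : vertex k) : option (clock k) :=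
  match v, w with
  | None, Some i => Some (inr (i, true))
  | Some i, None => Some (inr (i, false))
  | _, _ => None
  end.

Definition mutually_independent {d : measure_display} {T : measurableType d}
  {R : realType} (P : probability T R) {I : eqType} (X : I -> T -> R) : Prop :=
  forall (s : seq I), uniq s -> forall B : I -> set R,
    (forall i, measurable (B i)) ->
    P (\bigcap_(i in [set` s]) (X i @^-1` B i)) =
    (\prod_(i <- s) P (X i @^-1` B i))%E.

(* [tau c n] is the (n+1)-th interarrival time of clock c; the clocks are
   independent Poisson processes with rates [clock_rate lam c]. *)
Definition poisson_clocks {d : measure_display} {T : measurableType d}
  {R : realType} (P : probability T R) (k : nat) (lam : R)
  (tau : clock k * nat -> T -> R) : Prop :=
  (forall j, measurable_fun setT (tau j)) /\
  (forall c n B, measurable B ->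
     P (tau (c, n) @^-1` B) = exponential_prob (clock_rate lam c) B) /\
  mutually_independent P tau.

Definition arrival {T : Type} {R : realType} {k : nat}
  (tau : clock k * nat -> T -> R) (c : clock k) (n : nat) (w : T) : R :=
  \sum_(i < n.+1) tau (c, nat_of_ord i) w.

Definition no_recovery {T : Type} {R : realType} {k : nat}
  (tau : clock k * nat -> T -> R) (w : T) (v : vertex k) (s u : R) : Prop :=
  forall n, ~ (s < arrival tau (inl v) n w <= u).

(* an infection path starting at (v, s), making the successive jumps [hops]
   (target vertex, time of the infection arrow), and ending at (x, t) *)
Fixpoint inf_path {T : Type} {R : realType} {k : nat}
  (tau : clock k * nat -> T -> R) (w : T) (v : vertex k) (s : R)
  (hops : seq (vertex k * R)) (x : vertex k) (t : R) : Prop :=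
  match hops with
  | [::] => v = x /\ s <= t /\ no_recovery tau w v s t
  | (v', u) :: rest =>
      s <= u /\ no_recovery tau w v s u /\
      (exists c, arrow_clock v v' = Some c /\ exists n, arrival tau c n w = u) /\
      inf_path tau w v' u rest x t
  end.

(* contact process on S_k started from the configuration {rho}:
   x is infected at time t iff there is an infection path from (rho,0) to (x,t) *)
Definition infected {T : Type} {R : realType} {k : nat}
  (tau : clock k * nat -> T -> R) (w : T) (x : vertex k) (t : R) : Prop :=
  exists hops, inf_path tau w root 0 hops x t.

(* Main.v *)
Require Import Defs.
From HB Require Import structures.
From mathcomp Require Import all_boot all_order all_algebra.
From mathcomp Require Import all_classical all_reals all_analysis.
From mathcomp Require Import ring lra.
Import Order.TTheory GRing.Theory Num.Theory.
Local Open Scope classical_set_scope.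
Local Open Scope ring_scope.
Lemma bigcap_cons (I : eqType) (U : Type) (F : I -> set U) j s :
  \bigcap_(i in [set` (j :: s)]) F i = F j `&` \bigcap_(i in [set` s]) F i.
Proof.
apply/seteqP; split => w /=.
- move=> H; split; first by apply: H; rewrite /= inE eqxx.
  by move=> i /= si; apply: H; rewrite /= inE si orbT.
- move=> [Fj H] i /=; rewrite inE => /orP[/eqP ->//|si]; exact: H.
Qed.

Lemma bigcap_nil (I : eqType) (U : Type) (F : I -> set U) :
  \bigcap_(i in [set` [::]]) F i = setT.
Proof. by apply/seteqP; split => w //= _ i. Qed.

Lemma bigcap_seq_measurable d (T : measurableType d) (I : eqType) (F : I -> set T) (s : seq I) :
  (forall i, measurable (F i)) -> measurable (\bigcap_(i in [set` s]) F i).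
Proof.
move=> mF; elim: s => [|a s IH]; first by rewrite bigcap_nil.
by rewrite bigcap_cons; apply: measurableI.
Qed.

Lemma prod_const_seq (R : realType) (I : Type) (s : seq I) (x : R) :
  \prod_(i <- s) x = x ^+ size s.
Proof. by elim: s => [|a s IH]; rewrite ?big_nil ?expr0 // big_cons IH exprS. Qed.

Definition Ev {T : Type} {R : realType} {k : nat}
  (tau : clock k * nat -> T -> R) (T0 : R) (i : 'I_k) : set T :=
  tau (inr (i, true), 0%N) @^-1` `[0, T0] `&` tau (inl (Some i), 0%N) @^-1` `]1, +oo[.

Lemma tau_meas d (T : measurableType d) (R : realType) (P : probability T R) k lam
  (tau : clock k * nat -> T -> R) j (B : set R) :
  poisson_clocks P lam tau -> measurable B -> measurable (tau j @^-1` B).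
Proof.
move=> [mt _] mB; have := mt j measurableT B mB; by rewrite setTI.
Qed.
Arguments tau_meas {d T R P k lam tau j B}.

Lemma Ev_meas d (T : measurableType d) (R : realType) (P : probability T R) k lam
  (tau : clock k * nat -> T -> R) T0 i :
  poisson_clocks P lam tau -> measurable (Ev tau T0 i).
Proof.
move=> H; apply: measurableI; apply: (tau_meas H); exact: measurable_itv.
Qed.
Arguments Ev_meas {d T R P k lam tau T0 i}.

Lemma indep_all d (T : measurableType d) (R : realType) (P : probability T R) k lam
  (tau : clock k * nat -> T -> R) T0 (pa pb : R) (s : seq 'I_k) :
  poisson_clocks P lam tau ->
  exponential_prob lam `[0, T0] = pa%:E ->
  exponential_prob 1 `]1, +oo[ = pb%:E ->
  uniq s ->
  P (\bigcap_(i in [set` s]) Ev tau T0 i) = ((pa * pb) ^+ size s)%:E.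
Proof.
move=> H ha hb us.
have [_ [hd hind]] := H.
pose a := fun i : 'I_k => (inr (i, true) : clock k, 0%N).
pose b := fun i : 'I_k => (inl (Some i) : clock k, 0%N).
pose B : clock k * nat -> set R := fun j => match j.1 with inl _ => `]1, +oo[%classic | inr _ => `[0, T0]%classic end.
have E : \bigcap_(i in [set` s]) Ev tau T0 i =
         \bigcap_(j in [set` (map a s ++ map b s)]) tau j @^-1` B j.
  apply/seteqP; split => w /=.
  - move=> Hw j; rewrite /= mem_cat => /orP[] /mapP [i si ->].
    + by have [] := Hw i si.
    + by have [] := Hw i si.
  - move=> Hw i si; split.
    + by apply: (Hw (a i)); rewrite /= mem_cat map_f.
    + by apply: (Hw (b i)); rewrite /= mem_cat map_f ?orbT.
have U : uniq (map a s ++ map b s).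
  have ia : injective a by move=> x y [].
  have ib : injective b by move=> x y [].
  rewrite cat_uniq (map_inj_uniq ia) (map_inj_uniq ib) us /= andbT.
  by apply/hasPn => j /mapP [i _ ->]; apply/mapP => -[i' _].
have mB : forall j, measurable (B j).
  by move=> [[?|?] ?]; exact: measurable_itv.
rewrite E hind // big_cat !big_map /=.
rewrite (eq_bigr (fun=> pa%:E)); last by move=> i _; rewrite /a /b /B /=; have := hd (inr (i,true)) 0%N _ (measurable_itv `[0, T0]) => ->.
rewrite [X in (_ * X)%E](eq_bigr (fun=> pb%:E)); last by move=> i _; rewrite /a /b /B /=; have := hd (inl (Some i)) 0%N _ (measurable_itv `]1, +oo[) => h; exact: (etrans h hb).
rewrite !prodEFin -EFinM; congr EFin.
by rewrite !prod_const_seq exprMn.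
Qed.
Arguments indep_all {d T R P k lam tau T0 pa pb s}.


Definition Ex {T : Type} {R : realType} {k : nat}
  (tau : clock k * nat -> T -> R) (T0 : R) (s1 s2 : seq 'I_k) : set T :=
  \bigcap_(i in [set` s1]) Ev tau T0 i `&` \bigcap_(i in [set` s2]) ~` Ev tau T0 i.

Lemma Ex_meas d (T : measurableType d) (R : realType) (P : probability T R) k lam
  (tau : clock k * nat -> T -> R) T0 s1 s2 :
  poisson_clocks P lam tau -> measurable (Ex tau T0 s1 s2).
Proof.
move=> H; apply: measurableI; apply: bigcap_seq_measurable => i.
  exact: (Ev_meas H).
exact/measurableC/(Ev_meas H).
Qed.
Arguments Ex_meas {d T R P k lam tau T0 s1 s2}.

Lemma Ex_prob d (T : measurableType d) (R : realType) (P : probability T R) k lam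
  (tau : clock k * nat -> T -> R) T0 (pa pb : R) (s2 s1 : seq 'I_k) :
  poisson_clocks P lam tau ->
  exponential_prob lam `[0, T0] = pa%:E ->
  exponential_prob 1 `]1, +oo[ = pb%:E ->
  uniq (s1 ++ s2) ->
  P (Ex tau T0 s1 s2) = ((pa * pb) ^+ size s1 * (1 - pa * pb) ^+ size s2)%:E.
Proof.
move=> H ha hb; elim: s2 s1 => [|j s2 IH] s1 us.
  rewrite /Ex bigcap_nil setIT (indep_all H ha hb) ?mulr1 //.
  by move: us; rewrite cats0.
have us' : uniq (j :: s1 ++ s2).
  have p : perm_eq (s1 ++ [:: j] ++ s2) ([:: j] ++ s1 ++ s2).
    by rewrite (perm_catCA s1 [:: j] s2).
  by rewrite -(perm_uniq p).
move: (us'); rewrite cons_uniq => /andP[_ us1].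
have E1 : Ex tau T0 s1 (j :: s2) = Ex tau T0 s1 s2 `\` Ev tau T0 j.
  rewrite /Ex bigcap_cons; apply/seteqP; split => w /=.
  - by move=> [h1 [h2 h3]]; split => //; split.
  - by move=> [[h1 h3] h2]; split => //; split.
have E2 : Ex tau T0 s1 s2 `&` Ev tau T0 j = Ex tau T0 (j :: s1) s2.
  rewrite /Ex bigcap_cons; apply/seteqP; split => w /=.
  - by move=> [[h1 h3] h2]; split => //; split.
  - by move=> [[h2 h1] h3]; split => //; split.
rewrite E1 measureD; first last.
- apply: (le_lt_trans (probability_le1 _ _)); first exact: (Ex_meas H).
  exact: ltry.
- exact: (Ev_meas H).
- exact: (Ex_meas H).
rewrite E2.
apply: (@eq_trans _ _ (((pa * pb) ^+ size s1 * (1 - pa * pb) ^+ size s2)%:E -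
   ((pa * pb) ^+ size (j :: s1) * (1 - pa * pb) ^+ size s2)%:E)%E).
  by congr (_ - _)%E; [exact: IH | exact: IH].
rewrite -EFinB; congr EFin => /=.
rewrite !exprS; ring.
Qed.

Lemma eqle (R : realType) (x y : \bar R) : x = y -> (x <= y)%E.
Proof. by move=> ->. Qed.

Lemma exp_neg0 (R : realType) (r : R) : exponential_prob r `]-oo, 0[ = 0%E.
Proof.
rewrite /exponential_prob; apply: integral0_eq => x /=.
rewrite in_itv /= => x0; by rewrite lt0_exponential_pdf.
Qed.

Lemma P_neg0 d (T : measurableType d) (R : realType) (P : probability T R) k lam
  (tau : clock k * nat -> T -> R) c n :
  poisson_clocks P lam tau -> P (tau (c, n) @^-1` `]-oo, 0[) = 0%E.
Proof.
move=> [_ [hd _]].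
have h := hd c n _ (measurable_itv `]-oo, 0[).
rewrite h; exact: exp_neg0.
Qed.
Arguments P_neg0 {d T R P k lam tau c n}.

Lemma P_le_cdf d (T : measurableType d) (R : realType) (P : probability T R) k lam
  (tau : clock k * nat -> T -> R) c n (y : R) :
  poisson_clocks P lam tau -> 0 < y ->
  (P (tau (c, n) @^-1` `]-oo, y]) <= (1 - expR (- clock_rate lam c * y))%:E)%E.
Proof.
move=> H y0.
have [_ [hd _]] := H.
have m1 : measurable (tau (c, n) @^-1` `]-oo, 0[) by apply: (tau_meas H); exact: measurable_itv.
have m2 : measurable (tau (c, n) @^-1` `[0, y]) by apply: (tau_meas H); exact: measurable_itv.
apply: (@le_trans _ _ (P (tau (c, n) @^-1` `]-oo, 0[ `|` tau (c, n) @^-1` `[0, y]))).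
  apply: le_measure; rewrite ?inE.
  - by apply: (tau_meas H); exact: measurable_itv.
  - exact: measurableU.
  move=> w /=; rewrite !in_itv /= => hw.
  case: (ltP (tau (c, n) w) 0) => h; first by left.
  by right; apply/andP; split.
apply: le_trans (measureU2 _ m1 m2) _.
have h := hd c n _ (measurable_itv `[0, y]).
rewrite -[X in (_ <= X)%E]add0e EFinB -exponential_prob_itv0c //.
by apply: leeD; apply: eqle; [exact: (P_neg0 H) | exact: h].
Qed.
Arguments P_le_cdf {d T R P k lam tau c n y}.

Lemma in_bigsetU (I : eqType) (U : Type) (F : I -> set U) (s : seq I) (Q : pred I) w :
  (\big[setU/set0]_(i <- s | Q i) F i) w <-> exists i, i \in s /\ Q i /\ F i w.
Proof.
elim: s => [|a s IH]; first by rewrite big_nil; split => // -[i []].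
rewrite big_cons; case: ifPn => Qa.
- split.
  + move=> [Fa|/IH [i [i1 [i2 i3]]]]; first by exists a; rewrite inE eqxx.
    by exists i; rewrite inE i1 orbT.
  + move=> [i [+ [Qi Fi]]]; rewrite inE => /orP[/eqP <-|ins]; first by left.
    by right; apply/IH; exists i.
- rewrite IH; split; move=> [i [i1 [i2 i3]]]; exists i; split => //.
  + by rewrite inE i1 orbT.
  + move: i1; rewrite inE => /orP[/eqP ai|//].
    by rewrite -ai i2 in Qa.
Qed.

Lemma bigsetU_le d (T : measurableType d) (R : realType) (P : probability T R)
  (I : Type) (F : I -> set T) (s : seq I) (Q : pred I) :
  (forall i, measurable (F i)) ->
  (P (\big[setU/set0]_(i <- s | Q i) F i) <= \sum_(i <- s | Q i) P (F i))%E.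
Proof.
move=> mF; elim: s => [|a s IH]; first by rewrite !big_nil measure0.
rewrite !big_cons; case: ifPn => // Qa.
apply: le_trans (measureU2 _ _ _) _ => //.
  by apply: bigsetU_measurable.
exact: leeD.
Qed.

Lemma prod_if_set (R : realType) k (L : {set 'I_k}) (a b : R) :
  \prod_(i : 'I_k) (if i \in L then a else b) = a ^+ #|L| * b ^+ #|~: L|.
Proof.
rewrite (bigID (mem L)) /=; congr (_ * _).
  by rewrite -prodr_const; apply: eq_bigr => i ->.
rewrite -prodr_const; apply: eq_big => [i|i]; first by rewrite !inE.
by move=> /negbTE ->.
Qed.

Lemma ln2_le1 (R : realType) : ln (2 : R) <= 1.
Proof.
have h : (2 : R) <= expR 1 by have := expR_ge1Dx (1 : R); rewrite (_ : 1 + 1 = 2).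
rewrite -[leRHS](expRK 1) ler_ln ?posrE ?expR_gt0 //.
Qed.

Lemma expR_nat_ln2 (R : realType) (n : nat) : expR (n%:R * ln (2 : R)) = 2 ^+ n.
Proof. by rewrite expRM_natl lnK // posrE. Qed.

Lemma tail_bound (R : realType) k (x m : R) : 0 <= x <= 1 -> 0 <= m ->
  \sum_(L : {set 'I_k} | #|L|%:R < m) x ^+ #|L| * (1 - x) ^+ #|~: L|
  <= expR (m * ln 2) * (1 - x / 2) ^+ k.
Proof.
move=> /andP[x0 x1] m0.
have ln20 : 0 <= ln (2 : R) by rewrite ln_ge0 // ler1n.
apply: (@le_trans _ _ (\sum_(L : {set 'I_k} | #|L|%:R < m)
     expR (m * ln 2) * ((x / 2) ^+ #|L| * (1 - x) ^+ #|~: L|))).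
  apply: ler_sum => L hL.
  rewrite expr_div_n mulrA mulrAC [X in _ <= X]mulrAC.
  apply: ler_wpM2r; first by rewrite exprn_ge0 // subr_ge0.
  rewrite mulrC -mulrA ler_peMr ?exprn_ge0 //.
  rewrite -expR_nat_ln2 ler_pdivlMl ?expR_gt0 // mulr1 ler_expR.
  by apply: ler_wpM2r => //; exact: ltW.
apply: (@le_trans _ _ (\sum_(L : {set 'I_k})
     expR (m * ln 2) * ((x / 2) ^+ #|L| * (1 - x) ^+ #|~: L|))).
  rewrite [X in _ <= X](bigID (fun L : {set 'I_k} => #|L|%:R < m)) /= lerDl.
  apply: sumr_ge0 => L _; apply: mulr_ge0; first exact: expR_ge0.
  by apply: mulr_ge0; apply: exprn_ge0 => //; [apply: divr_ge0|rewrite subr_ge0].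
rewrite -mulr_sumr; apply: ler_wpM2l; first exact: expR_ge0.
under eq_bigr do rewrite -prod_if_set.
rewrite -bigA_distr prodr_const card_ord.
rewrite /= (_ : x / 2 + (1 - x) = 1 - x / 2); [exact: lexx | lra].
Qed.
Arguments Ex_prob {d T R P k lam tau T0 pa pb s2 s1}.

Theorem lemma3p1 (R : realType) (d : measure_display) (T : measurableType d)
  (P : probability T R) (k : nat) (lam C : R)
  (tau : clock k * nat -> T -> R) :
  poisson_clocks P lam tau ->
  0 < lam -> lam < 1 ->
  0 < C -> C <= (lam * k%:R) / (32 * ln (lam * k%:R)) ->
  exists A : set T, measurable A /\
    A `<=` [set w | exists L : {set 'I_k},
                      C * ln (lam * k%:R) <= (#|L|)%:R /\
                      forall i, i \in L -> forall t : R,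
                        16 * C * ln (lam * k%:R) / (lam * k%:R) <= t <= 1 ->
                        infected tau w (Some i) t] /\
    ((1 - 16 * C * ln (lam * k%:R) / (lam * k%:R)
       - 4 * (lam * k%:R) `^ (- (C / 4)))%:E <= P A)%E.
Proof.
move=> H lam0 lam1 C0 Cle.
set l := lam * k%:R.
have l0 : 0 <= l by rewrite /l mulr_ge0 // ltW.
have lnl0 : 0 < ln l.
  rewrite ltNge; apply/negP => hle.
  have h : l / (32 * ln l) <= 0.
    apply: mulr_ge0_le0 => //; rewrite invr_le0.
    by rewrite mulr_ge0_le0.
  by have := le_trans Cle h; rewrite leNgt C0.
have l1 : 1 < l.
  by rewrite ltNge; apply/negP => h; have := ln_le0 h; rewrite leNgt lnl0.
have lpos : 0 < l by lra.
set m := C * ln l.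
have m0 : 0 < m by rewrite /m mulr_gt0.
have m32 : 32 * m <= l.
  by move: Cle; rewrite ler_pdivlMr ?mulr_gt0 // /m mulrCA.
set T0 := 16 * C * ln l / l.
have T0E : T0 = 16 * m / l by rewrite /T0 /m mulrA.
have T00 : 0 < T0 by rewrite T0E divr_gt0 // mulr_gt0.
have T01 : T0 <= 1 / 2.
  by rewrite T0E ler_pdivrMr // ; lra.
have lT0 : l * T0 = 16 * m by rewrite T0E mulrC divfK // gt_eqF.
have lamT0 : lam * T0 <= 1 / 2 by nra.
have [mt [hd hind]] := H.
set pa := 1 - expR (- (lam * T0)).
have ha : exponential_prob lam `[0, T0] = pa%:E.
  by rewrite exponential_prob_itv0c // EFinB mulNr.
have pa_lb : 2 / 3 * (lam * T0) <= pa.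
  have e1 := expR_ge1Dx (lam * T0).
  have e2 := expRxMexpNx_1 (lam * T0).
  have e3 := expR_gt0 (- (lam * T0)).
  have lT0p : 0 < lam * T0 by rewrite mulr_gt0.
  rewrite /pa; nra.
have pa1 : pa <= 1 by rewrite /pa; have := expR_ge0 (- (lam * T0)); lra.
set A1 := tau (inl None, 0%N) @^-1` `]1, +oo[.
have mA1 : measurable A1 by apply: (tau_meas H); exact: measurable_itv.
have hA1 : P A1 = exponential_prob 1 `]1, +oo[ := hd (inl None) 0%N _ (measurable_itv _).
set pb := fine (P A1).
have PA1 : P A1 = pb%:E.
  rewrite fineK // ge0_fin_numE ?measure_ge0 //.
  exact: (le_lt_trans (probability_le1 P mA1) (ltry _)).
have hb : exponential_prob 1 `]1, +oo[ = pb%:E by rewrite -hA1.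
have hC : P (~` A1) = (1 - pb)%:E by rewrite probability_setC // PA1 EFinB.
have hC2 : (P (~` A1) <= (1 - expR (- clock_rate lam (inl (@None 'I_k)) * 1))%:E)%E.
  apply: (le_trans _ (P_le_cdf (c:=inl None) (n:=0%N) H ltr01)).
  apply: le_measure; rewrite ?inE.
  - exact: measurableC.
  - by apply: (tau_meas H); exact: measurable_itv.
  move=> w /=; rewrite /A1 /= !in_itv /= andbT => h.
  by rewrite leNgt; apply/negP.
have pb_lb : expR (-1) <= pb.
  by move: hC2; rewrite hC lee_fin /= mulr1; lra.
have pb1 : pb <= 1.
  have h0 : (0 <= P (~` A1))%E := measure_ge0 _ _.
  by move: h0; rewrite hC lee_fin; lra.
have e14 : 1 / 4 <= expR (-1 : R).
  have -> : (-1 : R) = - (1 / 2) + - (1 / 2) by lra.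
  rewrite expRD.
  have := expR_ge1Dx (- (1 / 2) : R); nra.
set pp := pa * pb.
have pa0 : 0 <= pa by have := mulr_gt0 lam0 T00; nra.
have pp0 : 0 <= pp by rewrite /pp mulr_ge0 //; lra.
have pp1 : pp <= 1 by rewrite /pp; nra.
have pp_lb : lam * T0 / 6 <= pp by rewrite /pp; nra.
have kT0 : k%:R * (lam * T0) = 16 * m by rewrite -lT0 /l mulrA [k%:R * lam]mulrC.
have k0 : 0 <= k%:R :> R by [].
have expo : m * ln 2 + k%:R * (- (pp / 2)) <= - (m / 4).
  have := ln2_le1 R.
  have : k%:R * (lam * T0 / 6) <= k%:R * pp by apply: ler_wpM2l.
  nra.
have tailR : expR (m * ln 2) * (1 - pp / 2) ^+ k <= expR (- (m / 4)).
  apply: le_trans (_ : expR (m * ln 2) * expR (k%:R * (- (pp / 2))) <= _).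
    apply: ler_wpM2l; first exact: expR_ge0.
    rewrite expRM_natl; apply: lerXn2r; rewrite ?nnegrE ?expR_ge0 //; first lra.
    by have := expR_ge1Dx (- (pp / 2)); lra.
  by rewrite -expRD ler_expR.
have Qe : l `^ (- (C / 4)) = expR (- (m / 4)).
  by rewrite /powR gt_eqF // /m mulNr mulrAC.
set Rr := tau (inl None, 0%N) @^-1` `]T0, +oo[.
pose vof (j : nat) : option 'I_k := if j is j'.+1 then insub j' else None.
set Bad := \bigcup_n \bigcup_j tau (inl (vof j), n) @^-1` `]-oo, 0[.
set Good := \big[setU/set0]_(L : {set 'I_k} | m <= #|L|%:R) Ex tau T0 (enum L) [::].
have mRr : measurable Rr by apply: (tau_meas H); exact: measurable_itv.
have mBad : measurable Bad.
  apply: bigcupT_measurable => n; apply: bigcupT_measurable => j.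
  by apply: (tau_meas H); exact: measurable_itv.
have mGood : measurable Good.
  by apply: bigsetU_measurable => L _; exact: (Ex_meas H).
exists (Rr `&` Good `&` ~` Bad); split.
  by apply: measurableI; [exact: measurableI | exact: measurableC].
split.
  move=> w [[hR hG] hB].
  have nneg : forall v n, 0 <= tau (inl v, n) w.
    move=> v n; rewrite leNgt; apply/negP => hneg; apply: hB.
    exists n => //.
    case: v hneg => [i|] hneg.
      exists i.+1 => //=; rewrite /vof valK /= in_itv /=; exact: hneg.
    by exists 0%N => //=; rewrite in_itv /=.
  have arr_ge : forall v n, tau (inl v, 0%N) w <= arrival tau (inl v) n w.
    move=> v n; rewrite /arrival big_ord_recl /= lerDl.
    by apply: sumr_ge0 => i _; exact: nneg.
  have [L [_ [hmL hEx]]] := (in_bigsetU _ _ _ _ _ w).1 hG.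
  exists L; split => // i iL t /andP[t1 t2].
  have [ha1 _] := hEx.
  have [hEa hEb] : Ev tau T0 i w by apply: ha1; rewrite /= mem_enum.
  move: hEa hEb; rewrite /= !in_itv /= andbT => /andP[u0 uT0] u1.
  exists [:: (Some i, tau (inr (i, true), 0%N) w)] => /=.
  split => //; split.
    move=> n /andP[_ hn]; have := arr_ge None n; move: hR; rewrite /Rr /= in_itv /= andbT.
    rewrite /root in hn; move=> h1 h2; lra.
  split.
    exists (inr (i, true)); split => //; exists 0%N.
    by rewrite /arrival big_ord1.
  split => //; split; first lra.
  move=> n /andP[_ hn]; have := arr_ge (Some i) n; lra.
have PBad : P Bad = 0%E.
  apply/negligibleP => //.
  apply: negligible_bigcup => n; apply: negligible_bigcup => j.
  apply/negligibleP; first by apply: (tau_meas H); exact: measurable_itv.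
  exact: (P_neg0 H).
have PRr : (P (~` Rr) <= T0%:E)%E.
  apply: (le_trans _ (le_trans (P_le_cdf (c:=inl None) (n:=0%N) H T00) _)).
    apply: le_measure; rewrite ?inE.
    - exact: measurableC.
    - by apply: (tau_meas H); exact: measurable_itv.
    move=> w /=; rewrite /Rr /= !in_itv /= andbT => h.
    by rewrite leNgt; apply/negP.
  rewrite lee_fin /= mulN1r.
  by have := expR_ge1Dx (- T0); lra.
have PGood : (P (~` Good) <= (expR (- (m / 4)))%:E)%E.
  set Cov := \big[setU/set0]_(L : {set 'I_k} | #|L|%:R < m) Ex tau T0 (enum L) (enum (~: L)).
  have mCov : measurable Cov by apply: bigsetU_measurable => L _; exact: (Ex_meas H).
  apply: (@le_trans _ _ (P Cov)).
    apply: le_measure; rewrite ?inE; [exact: measurableC | exact: mCov |].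
    move=> w nG.
    pose L0 : {set 'I_k} := [set i : 'I_k | `[< Ev tau T0 i w >]]%SET.
    apply/(in_bigsetU _ _ _ _ _ w).2; exists L0; split; first exact: mem_index_enum.
    split.
      rewrite ltNge; apply/negP => hm; apply: nG.
      apply/(in_bigsetU _ _ _ _ _ w).2; exists L0; split; first exact: mem_index_enum.
      split => //; split; last by move=> i /=; rewrite in_nil.
      by move=> i /=; rewrite mem_enum inE => /asboolP.
    split.
      by move=> i /=; rewrite mem_enum inE => /asboolP.
    by move=> i /=; rewrite mem_enum !inE => /asboolPn.
  apply: (le_trans (bigsetU_le _ _ _ P _ _ _ _ (fun L => Ex_meas H))).
  rewrite (eq_bigr (fun L : {set 'I_k} => (pp ^+ #|L| * (1 - pp) ^+ #|~: L|)%:E)); last first.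
    move=> L _; rewrite !cardE; apply: (Ex_prob H ha hb).
    rewrite cat_uniq !enum_uniq andbT /=; apply/hasPn => i.
    by rewrite !mem_enum !inE.
  rewrite sumEFin lee_fin.
  apply: (le_trans (tail_bound R k pp m _ _) tailR); [lra | lra].
have mA : measurable (Rr `&` Good `&` ~` Bad).
  by apply: measurableI; [exact: measurableI | exact: measurableC].
have hsub : ~` (Rr `&` Good `&` ~` Bad) `<=` (~` Rr `|` ~` Good) `|` Bad.
  move=> w /= nw.
  case: (pselect (Bad w)) => hb'; first by right.
  left; case: (pselect (Rr w)) => hr; last by left.
  by right => hg; apply: nw.
have hPc : (P (~` (Rr `&` Good `&` ~` Bad)) <= (T0 + expR (- (m / 4)))%:E)%E.
  apply: (@le_trans _ _ (P ((~` Rr `|` ~` Good) `|` Bad))).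
    apply: le_measure; rewrite ?inE //; first exact: measurableC.
    by apply: measurableU => //; apply: measurableU; exact: measurableC.
  apply: le_trans (measureU2 _ _ _) _; first by apply: measurableU; exact: measurableC.
    exact: mBad.
  apply: (@le_trans _ _ ((T0%:E + (expR (- (m / 4)))%:E) + 0)%E); last by rewrite adde0 EFinD.
  apply: leeD; last exact: (eqle _ _ _ PBad).
  apply: le_trans (measureU2 _ _ _) _; [exact: measurableC | exact: measurableC |].
  exact: leeD.
have hPA := probability_setC P mA.
set pA := fine (P (Rr `&` Good `&` ~` Bad)).
have PA : P (Rr `&` Good `&` ~` Bad) = pA%:E.
  rewrite fineK // ge0_fin_numE ?measure_ge0 //.
  exact: (le_lt_trans (probability_le1 P mA) (ltry _)).
move: hPc; rewrite hPA PA -EFinB !lee_fin Qe => h.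
by have := expR_ge0 (- (m / 4)); lra.
Qed.
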